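(* Let $G$ be a finite simple graph, let $k\ge 0$, and let $P$ be a $(3k+2)$-string based at a vertex $v$ of $G$. Let $w$ be the vertex of $P$ adjacent to $v$, and set $U=N_G(v)\setminus\{w\}$. Then the inclusion $I(G\setminus U)\hookrightarrow I(G)$ is a homotopy equivalence.
   Context: For a finite simple graph $G$, $I(G)$ is the independence complex (simplicial complex on $V(G)$ whose simplices are the independent sets). For $S\subseteq V(G)$, $G\setminus S$ is the induced subgraph on $V(G)\setminus S$. $N_G(v)$ is the set of neighbours of $v$. An $n$-string based at $v$ in $G$ is an induced subgraph $P$ of $G$ such that $P$ is isomorphic to the path graph with $n$ vertices, $v$ is an endpoint of $P$, and every vertex of $P$ other than $v$ is adjacent to no vertex of $V(G)\setminus V(P)$. *)

(* Defs.v *)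
From mathcomp Require Import all_boot all_order all_algebra.
From mathcomp Require Import all_classical all_reals all_analysis.
Import numFieldNormedType.Exports.
Import Order.TTheory GRing.Theory Num.Theory.

Set Implicit Arguments.
Unset Strict Implicit.
Unset Printing Implicit Defensive.

Local Open Scope classical_set_scope.
Local Open Scope ring_scope.

(* A finite simple graph G is a finite vertex type T with a symmetric,
   irreflexive adjacency relation e (these two properties are hypotheses
   of the theorem). *)

Definition nbhd (T : finType) (e : rel T) (v : T) : {set T} := [set u | e v u].

(* A is an independent set of the induced subgraph G \ S, i.e. an
   independent set of G avoiding S. *)
Definition indep_in (T : finType) (e : rel T) (S A : {set T}) : bool :=
  [disjoint A & S] && [forall x in A, forall y in A, ~~ e x y].

Definition indep_complex (T : finType) (e : rel T) (S : {set T})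
  : {set {set T}} := [set A | indep_in e S A].

(* Geometric realization |K| of a simplicial complex K on the vertex set T,
   as a subspace of R^T (product topology): the points with nonnegative
   barycentric coordinates summing to 1 whose support is a face of K. *)
Definition realization (R : realType) (T : finType) (K : {set {set T}})
  : set {ptws T -> R} :=
  [set x | (forall t, 0 <= x t) /\ \sum_(t : T) x t = 1
           /\ finset (fun t => x t != 0) \in K].

(* f and g (maps X -> X sending A into A) are homotopic as maps A -> A:
   a homotopy H : [0,1] x A -> A, continuous for the subspace topology. *)
Definition homotopic_on (R : realType) (X : topologicalType) (A : set X)
  (f g : X -> X) : Prop :=
  exists H : R * X -> X,
    {within `[(0:R), 1] `*` A, continuous H} /\
    (forall t x, 0 <= t <= 1 -> A x -> A (H (t, x))) /\
    (forall x, A x -> H (0, x) = f x) /\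
    (forall x, A x -> H (1, x) = g x).

(* The inclusion A ⊆ B of subspaces of X is a homotopy equivalence:
   there is a continuous r : B -> A with r ∘ incl ≃ id_A and
   incl ∘ r ≃ id_B. *)
Definition inclusion_homotopy_equivalence (R : realType) (X : topologicalType)
  (A B : set X) : Prop :=
  A `<=` B /\
  exists r : X -> X,
    {within B, continuous r} /\ r @` B `<=` A /\
    homotopic_on R A id r /\ homotopic_on R B id r.

(* P (given by its vertex set) is an n-string based at v in G: the induced
   subgraph on P is isomorphic to the path graph on n vertices, v is an
   endpoint of it (degree <= 1 in P), and every vertex of P other than v
   has no neighbour outside P. *)
Definition is_string (T : finType) (e : rel T) (n : nat) (v : T)
  (P : {set T}) : Prop :=
  (exists f : 'I_n -> T,
      injective f /\ f @: [set: 'I_n]%SET = P /\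
      forall i j : 'I_n, e (f i) (f j) = ((i.+1 == j) || (j.+1 == i))%N)
  /\ v \in P
  /\ (#|[set y in P | e v y]%SET| <= 1)%N
  /\ (forall x, x \in P -> x != v -> forall y, y \notin P -> ~~ e x y).

Arguments realization R {T} K.
Arguments homotopic_on R {X} A f g.
Arguments inclusion_homotopy_equivalence R {X} A B.

(* Main.v *)
Require Import Defs.
From mathcomp Require Import all_boot all_order all_algebra.
From mathcomp Require Import all_classical all_reals all_analysis.
From mathcomp Require Import zify.
Import numFieldNormedType.Exports.
Import Order.TTheory GRing.Theory Num.Theory.
Set Implicit Arguments.
Unset Strict Implicit.
Unset Printing Implicit Defensive.
From mathcomp Require Import ring lra.
Lemma orient (T : finType) (e : rel T) (N : nat) (v : T) (P : {set T}) :
  symmetric e -> irreflexive e -> (0 < N)%N ->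
  is_string e N.+1 v P ->
  exists p : nat -> T,
    [/\ p 0%N = v,
        (forall i j, (i <= N)%N -> (j <= N)%N -> e (p i) (p j) = (i.+1 == j) || (j.+1 == i)),
        (forall i j, (i <= N)%N -> (j <= N)%N -> p i = p j -> i = j),
        (forall i, (i <= N)%N -> p i \in P) &
        (forall y, y \in P -> exists2 i, (i <= N)%N & y = p i)].
Proof.
move=> sym irr N0 [[f [finj [fP fe]]] [vP [deg _]]].
have : v \in f @: [set: 'I_N.+1] by rewrite fP.
case/imsetP => i0 _ vi0.
pose q i := f (inord i).
have qK : forall i, (i <= N)%N -> nat_of_ord (inord i : 'I_N.+1) = i.
  by move=> i iN; rewrite inordK.
have qe : forall i j, (i <= N)%N -> (j <= N)%N -> e (q i) (q j) = (i.+1 == j) || (j.+1 == i).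
  by move=> i j iN jN; rewrite /q fe !qK.
have qi : forall i j, (i <= N)%N -> (j <= N)%N -> q i = q j -> i = j.
  by move=> i j iN jN /finj /(congr1 (@nat_of_ord _)); rewrite !qK.
have qP : forall i, (i <= N)%N -> q i \in P.
  by move=> i iN; rewrite -fP; apply: imset_f.
have qS : forall y, y \in P -> exists2 i, (i <= N)%N & y = q i.
  move=> y; rewrite -fP => /imsetP [j _ ->]; exists (nat_of_ord j); first by rewrite -ltnS.
  by rewrite /q; congr f; apply: val_inj; rewrite /= inordK.
have i0q : v = q i0 by rewrite vi0 /q; congr f; apply: val_inj; rewrite /= inordK.
have i0N : (i0 <= N)%N by rewrite -ltnS.
case: (posnP i0) => [i00|i0pos].
  by exists q; split; try done; rewrite i0q i00.
case: (eqVneq (nat_of_ord i0) N) => [i0N'|i0N'].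
  exists (fun i => q (N - i)%N); split.
  - by rewrite subn0 i0q i0N'.
  - move=> i j iN jN; rewrite qe ?leq_subr //.
    apply/idP/idP => /orP [] /eqP H; apply/orP; first [by right; apply/eqP; lia | by left; apply/eqP; lia].
  - move=> i j iN jN /qi; rewrite !leq_subr => /(_ isT isT); lia.
  - by move=> i iN; apply: qP; rewrite leq_subr.
  - move=> y /qS [i iN ->]; exists (N - i)%N; first by rewrite leq_subr.
    by rewrite subKn.
exfalso.
have i0lt : (i0 < N)%N by rewrite ltn_neqAle i0N' i0N.
have h1 : q i0.-1 \in [set y in P | e v y].
  rewrite inE qP; last lia.
  rewrite i0q qe; [|lia|lia]. by apply/orP; right; apply/eqP; lia.
have h2 : q i0.+1 \in [set y in P | e v y].
  rewrite inE qP; last lia.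
  rewrite i0q qe; [|lia|lia]. by apply/orP; left; apply/eqP; lia.
have hne : q i0.-1 != q i0.+1.
  by apply/eqP => /qi H; have := H ltac:(lia) ltac:(lia); lia.
have : (2 <= #|[set y in P | e v y]|)%N.
  have -> : 2%N = #|[set q i0.-1; q i0.+1]| by rewrite cards2 hne.
  apply: subset_leq_card; apply/fintype.subsetP => y; move: h1 h2; rewrite !inE => h1 h2 /orP [] /eqP -> //.
lia.
Qed.
Definition indepb (T : finType) (e : rel T) (A : {set T}) : bool :=
  [forall x in A, forall y in A, ~~ e x y].

Lemma indep_inE (T : finType) (e : rel T) (S A : {set T}) :
  indep_in e S A = [disjoint A & S] && indepb e A.
Proof. by []. Qed.

Lemma indepbP (T : finType) (e : rel T) (A : {set T}) :
  reflect (forall x y, x \in A -> y \in A -> ~~ e x y) (indepb e A).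
Proof.
apply: (iffP forallP) => [H x y xA yA|H x].
  by have /implyP/(_ xA)/forallP/(_ y)/implyP/(_ yA) := H x.
by apply/implyP => xA; apply/forallP => y; apply/implyP => yA; apply: H.
Qed.

Lemma indepb_sub (T : finType) (e : rel T) (A B : {set T}) :
  A \subset B -> indepb e B -> indepb e A.
Proof.
move=> /fintype.subsetP AB /indepbP H; apply/indepbP => x y xA yA.
by apply: H; apply: AB.
Qed.

Lemma indep_in_sub (T : finType) (e : rel T) (S A B : {set T}) :
  A \subset B -> indep_in e S B -> indep_in e S A.
Proof.
move=> AB; rewrite !indep_inE => /andP [dB iB]; apply/andP; split.
  exact: disjointWl AB dB.
exact: indepb_sub iB.
Qed.

Lemma indep_union_map (T : finType) (e : rel T) (S : {set T}) (h : T -> T) (a : T) :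
  symmetric e -> irreflexive e -> indepb e S ->
  (forall x, x \in S -> h x = x \/ (h x = a /\ forall y, y \in S -> ~~ e a y)) ->
  indepb e (S :|: h @: S).
Proof.
move=> sym irr /indepbP iS H.
have good : forall z, z \in S :|: h @: S -> z \in S \/ (z = a /\ forall y, y \in S -> ~~ e a y).
  move=> z; rewrite finset.in_setU => /orP [zS|/imsetP [x xS ->]]; first by left.
  by case: (H x xS) => [->|[-> Ha]]; [left|right].
apply/indepbP => x y /good [xS|[-> Ha]] /good [yS|[-> Hb]].
- exact: iS.
- by rewrite sym; apply: Hb.
- exact: Ha.
- by rewrite irr.
Qed.

Definition stg (T : finType) (k : nat) (p : nat -> T) (U : {set T}) (i : nat) (x : T) : T :=
  if (i < k)%N then (if x == p (3 * (k - i) - 1)%N then p (3 * (k - i) + 1)%N else x)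
  else (if x \in U then p 1%N else x).

Fixpoint Gv (T : finType) (k : nat) (p : nat -> T) (U : {set T}) (i : nat) (x : T) : T :=
  match i with 0 => x | i'.+1 => stg k p U i' (Gv k p U i' x) end.

Lemma GvS (T : finType) (k : nat) (p : nat -> T) (U : {set T}) i (S : {set T}) :
  Gv k p U i.+1 @: S = stg k p U i @: (Gv k p U i @: S).
Proof. by rewrite -imset_comp. Qed.

Lemma Gv0 (T : finType) (k : nat) (p : nat -> T) (U : {set T}) (S : {set T}) :
  Gv k p U 0 @: S = S.
Proof. by rewrite imset_id. Qed.

Lemma core (T : finType) (e : rel T) (k : nat) (v : T) (p : nat -> T) (P U : {set T}) :
  symmetric e -> irreflexive e -> p 0%N = v ->
  (forall i j, (i <= 3 * k + 1)%N -> (j <= 3 * k + 1)%N -> e (p i) (p j) = (i.+1 == j) || (j.+1 == i)) ->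
  (forall i j, (i <= 3 * k + 1)%N -> (j <= 3 * k + 1)%N -> p i = p j -> i = j) ->
  (forall i, (i <= 3 * k + 1)%N -> p i \in P) ->
  (forall y, y \in P -> exists2 i, (i <= 3 * k + 1)%N & y = p i) ->
  (forall x, x \in P -> x != v -> forall y, y \notin P -> ~~ e x y) ->
  (forall u, u \in U -> e v u) -> (forall u, u \in U -> u \notin P) ->
  forall S, indepb e S ->
  forall i, (i <= k)%N -> indepb e (Gv k p U i @: S :|: Gv k p U i.+1 @: S).
Proof.
move=> sym irr p0 pe pinj pP Pp out Uv UP S iS.
pose Inv i (S' : {set T}) := indepb e S' /\
   forall j, (j < i)%N -> (j < k)%N -> p (3 * (k - j) - 1)%N \notin S'.
have nb : forall l y, (0 < l <= 3 * k + 1)%N -> e (p l) y ->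
    exists2 m, (m <= 3 * k + 1)%N & y = p m /\ ((l.+1 == m) || (m.+1 == l)).
  move=> l y /andP [l0 lN] ely.
  have yP : y \in P.
    apply: contraT => yP; have := out (p l) (pP l lN).
    have -> : p l != v by apply/eqP => H; move: H; rewrite -p0 => /pinj; lia.
    by move=> /(_ isT y yP); rewrite ely.
  case: (Pp y yP) => m mN ym; exists m => //; split => //.
  by rewrite -pe // -ym.
have step : forall i S', (i <= k)%N -> Inv i S' ->
    indepb e (S' :|: stg k p U i @: S') /\ ((i < k)%N -> Inv i.+1 (stg k p U i @: S')).
  move=> i S' ik [iS' rem].
  case: (ltnP i k) => [ilt|ige].
  - set b := p (3 * (k - i) - 1)%N; set a := p (3 * (k - i) + 1)%N.
    have stgE : forall x, stg k p U i x = if x == b then a else x by move=> x; rewrite /stg ilt.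
    have Hu : indepb e (S' :|: stg k p U i @: S').
      apply: (@indep_union_map _ _ _ _ a) => // x xS; rewrite stgE.
      case: eqP => [xb|_]; last by left.
      right; split => // y yS; apply/negP => eay.
      have [m mN [ym hm]] := nb (3 * (k - i) + 1)%N y ltac:(lia) eay.
      case/orP: hm => /eqP hm.
      +
        have := rem (i.-1) ltac:(lia) ltac:(lia).
        have -> : (3 * (k - i.-1) - 1 = m)%N by lia.
        by rewrite -ym yS.
      +
        move/indepbP: iS' => /(_ x y xS yS); rewrite xb ym /b pe ?eqxx //; lia.
    split => // _; split.
      by apply: indepb_sub Hu; apply: finset.subsetUr.
    move=> j ji jk; apply/imsetP => [[x xS]]; rewrite stgE.
    case: eqP => [xb|xnb] H.
    + move: H => /pinj; lia.
    + case: (ltnP j i) => [ji'|ij].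
        by have := rem j ji' jk; rewrite H xS.
      have ij' : j = i by lia.
      by apply: xnb; rewrite -H ij'.
  - have ik' : i = k by lia.
    have stgE : forall x, stg k p U i x = if x \in U then p 1%N else x.
      by move=> x; rewrite /stg ltnNge ige.
    split; last by move=> Hk; exfalso; lia.
    apply: (@indep_union_map _ _ _ _ (p 1%N)) => // x xS; rewrite stgE.
    case: ifP => xU; last by left.
    right; split => // y yS; apply/negP => eay.
    have [m mN [ym hm]] := nb 1%N y ltac:(lia) eay.
    case/orP: hm => /eqP hm.
    + have := rem (k.-1) ltac:(lia) ltac:(lia).
      have -> : (3 * (k - k.-1) - 1 = m)%N by lia.
      by rewrite -ym yS.
    + move/indepbP: iS' => /(_ x y xS yS); rewrite sym.
      have -> : y = v by rewrite ym -p0; congr p; lia.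
      by rewrite Uv.
have inv : forall i, (i <= k)%N -> Inv i (Gv k p U i @: S).
  elim => [_|i IH ik]; first by rewrite Gv0; split => // j; lia.
  by rewrite GvS; apply: (step i _ (ltnW ik) (IH (ltnW ik))).2.
move=> i ik; rewrite GvS; exact: (step i _ ik (inv i ik)).1.
Qed.

Lemma stg_notU (T : finType) (k : nat) (p : nat -> T) (P U : {set T}) i x :
  (forall i, (i <= 3 * k + 1)%N -> p i \in P) -> (forall u, u \in U -> u \notin P) ->
  x \notin U -> stg k p U i x \notin U.
Proof.
move=> pP UP xU; rewrite /stg.
have pU : forall j, (j <= 3 * k + 1)%N -> p j \notin U.
  by move=> j jN; apply/negP => /UP; rewrite pP.
case: ifP => _; first by case: ifP => _ //; apply: pU; lia.
by case: ifP => _ //; apply: pU; lia.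
Qed.

Lemma Gv_notU (T : finType) (k : nat) (p : nat -> T) (P U : {set T}) i x :
  (forall i, (i <= 3 * k + 1)%N -> p i \in P) -> (forall u, u \in U -> u \notin P) ->
  x \notin U -> Gv k p U i x \notin U.
Proof.
move=> pP UP xU; elim: i => [|i IH] //=; exact: (stg_notU _ pP UP IH).
Qed.

Lemma Gvk_notU (T : finType) (k : nat) (p : nat -> T) (P U : {set T}) x :
  (forall i, (i <= 3 * k + 1)%N -> p i \in P) -> (forall u, u \in U -> u \notin P) ->
  Gv k p U k.+1 x \notin U.
Proof.
move=> pP UP /=; rewrite /stg ltnn; case: ifP => [_|/negbT //].
by apply/negP => /UP; rewrite pP //; lia.
Qed.
Local Open Scope ring_scope.

Definition push (R : realType) (T : finType) (h : T -> T) (x : T -> R) : T -> R :=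
  fun c => \sum_(s | h s == c) x s.

Lemma push_ge0 (R : realType) (T : finType) (h : T -> T) (x : T -> R) c :
  (forall t, 0 <= x t) -> 0 <= push h x c.
Proof. by move=> x0; apply: sumr_ge0 => s _. Qed.

Lemma push_sum (R : realType) (T : finType) (h : T -> T) (x : T -> R) :
  \sum_c push h x c = \sum_s x s.
Proof.
rewrite /push [RHS](partition_big h predT) //.
Qed.

Lemma push_id (R : realType) (T : finType) (x : T -> R) : push id x = x.
Proof.
apply: funext => c; rewrite /push /=.
by rewrite (big_pred1 c) // => s; rewrite /= eq_sym.
Qed.

Lemma push_supp (R : realType) (T : finType) (h : T -> T) (x : T -> R) :
  (forall t, 0 <= x t) ->
  [set c | push h x c != 0] = h @: [set s | x s != 0].
Proof.
move=> x0; apply/setP => c; rewrite inE; apply/idP/idP.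
  apply: contraR => /imsetP nc; apply/eqP; apply: big1 => s /eqP hs.
  apply/eqP; apply: contraT => xs; exfalso; apply: nc; exists s; by [rewrite inE | rewrite hs].
case/imsetP => s; rewrite inE => xs ->; apply: contra xs => /eqP H.
apply/eqP; move: (H); rewrite /push => /psumr_eq0P; apply => //.
Qed.

Definition hat (R : realType) (s : R) : R := Num.max 0 (1 - `|s|).

Lemma hat_ge0 (R : realType) (s : R) : 0 <= hat s.
Proof. by rewrite /hat le_max lexx. Qed.

Lemma hat_neq0 (R : realType) (s : R) : hat s != 0 -> `|s| < 1.
Proof.
rewrite /hat; apply: contraR; rewrite -leNgt => H.
by rewrite max_l // subr_le0.
Qed.

Lemma hat_small (R : realType) (s : R) : 1 <= `|s| -> hat s = 0.
Proof. by move=> H; rewrite /hat max_l // subr_le0. Qed.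

Lemma hat_in (R : realType) (s : R) : `|s| <= 1 -> hat s = 1 - `|s|.
Proof. by move=> H; rewrite /hat max_r // subr_ge0. Qed.

Lemma hat_sum_neg (R : realType) (m : nat) (y : R) : y <= 0 ->
  \sum_(i < m.+1) hat (y - i%:R) = hat y.
Proof.
move=> y0; rewrite big_ord_recl /= subr0 big1 ?addr0 // => i _.
have b1 : 1 <= (bump 0 i)%:R :> R by rewrite ler1n.
apply: hat_small; rewrite ler0_norm; lra.
Qed.

Lemma hat_sum (R : realType) (m : nat) (y : R) : 0 <= y <= m%:R ->
  \sum_(i < m.+1) hat (y - i%:R) = 1.
Proof.
elim: m y => [|m IH] y.
  rewrite big_ord1 /= subr0 => /andP [y0 y1].
  have -> : y = 0 by apply/eqP; rewrite eq_le y1 y0.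
  by rewrite hat_in normr0 ?subr0 // ler01.
move=> /andP [y0 ym]; rewrite big_ord_recl /= subr0.
have E : forall i : 'I_m.+1, y - (bump 0 i)%:R = (y - 1) - i%:R.
  by move=> i; rewrite /bump /= add1n -addn1 natrD; lra.
under eq_bigr do rewrite E.
have mE : (m.+1)%:R = m%:R + 1 :> R by rewrite -natr1.
case: (leP 1 y) => y1.
  rewrite hat_small; last by rewrite ger0_norm.
  rewrite add0r IH //; apply/andP; split; lra.
rewrite hat_sum_neg; last lra.
rewrite hat_in ?ger0_norm //; last lra.
rewrite hat_in ler0_norm; lra.
Qed.

Definition Hom (R : realType) (T : finType) (m : nat) (G : nat -> T -> T)
  (z : R * (T -> R)) : T -> R :=
  fun c => \sum_(i < m.+1) hat (m%:R * z.1 - i%:R) * push (G i) z.2 c.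

Lemma Hom_mem (R : realType) (T : finType) (K : {set {set T}}) (m : nat)
  (G : nat -> T -> T) (t : R) (x : T -> R) :
  (0 < m)%N ->
  (forall A B : {set T}, A \subset B -> B \in K -> A \in K) ->
  0 <= t <= 1 -> (forall c, 0 <= x c) -> \sum_c x c = 1 ->
  (forall i, (i < m)%N ->
     (G i @: [set s | x s != 0] :|: G i.+1 @: [set s | x s != 0]) \in K) ->
  [/\ forall c, 0 <= Hom m G (t, x) c, \sum_c Hom m G (t, x) c = 1
    & [set c | Hom m G (t, x) c != 0] \in K].
Proof.
move=> m0 Kdown /andP [t0 t1] x0 x1 HK.
have mt : 0 <= m%:R * t <= m%:R.
  apply/andP; split; first by apply: mulr_ge0.
  by rewrite -[X in _ <= X]mulr1; apply: ler_wpM2l.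
split.
- move=> c; apply: sumr_ge0 => i _; apply: mulr_ge0; first exact: hat_ge0.
  exact: push_ge0.
- rewrite /Hom exchange_big /=.
  under eq_bigr do rewrite -mulr_sumr push_sum x1 mulr1.
  exact: hat_sum.
have [j0 Hj0] : exists j : 'I_m.+1, hat (m%:R * t - j%:R) != 0.
  apply/existsP; apply: contraT; rewrite negb_exists => /forallP H.
  have : \sum_(i < m.+1) hat (m%:R * t - i%:R) = 0.
    by apply: big1 => i _; apply/eqP; move: (H i); rewrite negbK.
  by rewrite hat_sum // => /eqP; rewrite oner_eq0.
have ex : exists n, (n <= m)%N && (hat (m%:R * t - n%:R) != 0).
  by exists j0; rewrite Hj0 -ltnS ltn_ord.
case: (ex_minnP ex) => i1 /andP [i1m hi1] mini1.
set i2 := minn i1 m.-1.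
have close : forall j : 'I_m.+1, hat (m%:R * t - j%:R) != 0 ->
    (j : nat) = i2 \/ (j : nat) = i2.+1.
  move=> j hj.
  have ij : (i1 <= j)%N by apply: mini1; rewrite hj -ltnS ltn_ord.
  have := hat_neq0 hj; have := hat_neq0 hi1; rewrite !ltr_norml => /andP [a1 a2] /andP [b1 b2].
  have : (j%:R : R) < (i1 + 2)%:R by rewrite natrD; lra.
  rewrite ltr_nat => jlt.
  have jm : (j <= m)%N by rewrite -ltnS ltn_ord.
  rewrite /i2; lia.
have i2m : (i2 < m)%N by rewrite /i2; lia.
apply: (Kdown _ _ _ (HK i2 i2m)).
apply/fintype.subsetP => c; rewrite inE => Hc.
have [j Hj] : exists j : 'I_m.+1, hat (m%:R * t - j%:R) * push (G j) x c != 0.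
  apply/existsP; apply: contraT; rewrite negb_exists => /forallP H.
  move: Hc; rewrite /Hom big1 ?eqxx // => i _; apply/eqP; move: (H i); rewrite negbK.
  by [].
move: Hj; rewrite mulf_eq0 negb_or => /andP [hj pj].
have : c \in [set c | push (G j) x c != 0] by rewrite inE.
rewrite push_supp // => cG.
by case: (close j hj) => <-; rewrite finset.in_setU cG ?orbT.
Qed.

Lemma cont_sum (R : realType) (Y : topologicalType) (I : Type) (r : seq I) (P : pred I)
  (F : I -> Y -> R) :
  (forall i, continuous (F i)) -> continuous (fun y => \sum_(i <- r | P i) F i y).
Proof.
move=> Fc; elim: r => [|a r IH].
  under eq_fun do rewrite big_nil; exact: cst_continuous.
under eq_fun do rewrite big_cons.
case: (P a).
  by move=> y; exact: (continuousD (Fc a y) (IH y)).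
exact: IH.
Qed.

Lemma hat_cont (R : realType) : continuous (@hat R).
Proof.
move=> s.
have a := (@norm_continuous _ R^o s).
have b := (@cst_continuous R R (1:R) s).
have h1 : {for s, continuous (fun s : R => 1 - `|s|)} by exact: (continuousB b a).
exact: (continuous_max (@cst_continuous R R (0:R) s) h1).
Qed.

Lemma coord_cont (R : realType) (T : finType) (s : T) :
  continuous (fun z : R * {ptws T -> R} => z.2 s).
Proof.
move=> z; apply: (@continuous_comp _ _ _ snd (fun g : {ptws T -> R} => g s)).
  exact: cvg_snd.
exact: proj_continuous.
Qed.

Lemma fst_cont (R : realType) (T : finType) :
  continuous (fun z : R * {ptws T -> R} => z.1).
Proof. move=> z; exact: cvg_fst. Qed.

Lemma ptws_cont (R : realType) (T : finType) (X : topologicalType) (f : X -> {ptws T -> R}) :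
  (forall c, continuous (fun x => f x c)) -> continuous f.
Proof.
move=> H x.
pose f' : X -> {ptws discrete_topology T -> R} := f.
have Hf : Filter (fmap f' (nbhs x)) by apply: fmap_filter.
have := (@pointwise_cvgP (discrete_topology T) R (fmap f' (nbhs x)) (f' x) Hf).
case=> _ H2. 
have := H2 (fun c => H c x).
exact.
Qed.


Lemma Hom_cont (R : realType) (T : finType) (m : nat) (G : nat -> T -> T) :
  continuous (Hom m G : R * {ptws T -> R} -> {ptws T -> R}).
Proof.
apply: ptws_cont => c.
rewrite /Hom; apply: cont_sum => i y.
have h0 : {for y, continuous (fun z : R * {ptws T -> R} => m%:R * z.1 - i%:R)}.
  have a := (@cst_continuous _ R (m%:R : R) y).
  have b : {for y, continuous (fun z : R * {ptws T -> R} => z.1)} by exact: fst_cont.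
  have ab := continuousM a b.
  exact: (continuousB ab (@cst_continuous _ R (i%:R : R) y)).
have h1 : {for y, continuous (fun z : R * {ptws T -> R} => hat (m%:R * z.1 - i%:R))}.
  have hc : {for (m%:R * y.1 - i%:R), continuous (@hat R)} by exact: hat_cont.
  exact: (continuous_comp h0 hc).
have h2 : {for y, continuous (fun z : R * {ptws T -> R} => push (G i) z.2 c)}.
  by rewrite /push; apply: cont_sum => s; exact: coord_cont.
exact: (continuousM h1 h2).
Qed.

Lemma push_cont (R : realType) (T : finType) (h : T -> T) :
  continuous (push h : {ptws T -> R} -> {ptws T -> R}).
Proof.
apply: ptws_cont => c.
rewrite /push; apply: cont_sum => s; exact: proj_continuous.
Qed.

Lemma real_mem (R : realType) (T : finType) (K : {set {set T}}) (y : T -> R) :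
  (forall c, 0 <= y c) -> \sum_c y c = 1 -> [set c | y c != 0] \in K ->
  realization R K y.
Proof. by move=> *; split. Qed.

Lemma ic_down (T : finType) (e : rel T) (S : {set T}) :
  forall A B : {set T}, A \subset B -> B \in indep_complex e S -> A \in indep_complex e S.
Proof. by move=> A B AB; rewrite !inE; apply: indep_in_sub. Qed.

Lemma Hom0 (R : realType) (T : finType) (m : nat) (G : nat -> T -> T) (x : T -> R) :
  G 0%N = id -> Hom m G (0, x) = x.
Proof.
move=> G0; apply: funext => c; rewrite /Hom /= big_ord_recl /= mulr0 !subr0.
rewrite G0 push_id hat_in normr0 ?ler01 // subr0 mul1r big1 ?addr0 // => i _.
have b1 : 1 <= (bump 0 i)%:R :> R by rewrite ler1n.
rewrite hat_small ?mul0r //; rewrite ler0_norm; lra.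
Qed.

Lemma Hom1 (R : realType) (T : finType) (m : nat) (G : nat -> T -> T) (x : T -> R) :
  Hom m G (1, x) = push (G m) x.
Proof.
apply: funext => c; rewrite /Hom /= big_ord_recr /= mulr1 subrr.
rewrite hat_in normr0 ?ler01 // subr0 mul1r big1 ?add0r // => i _.
have : (i.+1 <= m)%N := ltn_ord i.
rewrite -(ler_nat R) -natr1 => h.
rewrite hat_small ?mul0r //; rewrite ger0_norm; lra.
Qed.

Local Close Scope ring_scope.
Unset Implicit Arguments.

Theorem proposition2p7 (R : realType) (T : finType) (e : rel T)
  (k : nat) (v w : T) (P : {set T}) :
  symmetric e -> irreflexive e ->
  is_string e (3 * k + 2) v P ->
  w \in P -> e v w ->
  inclusion_homotopy_equivalence R
    (realization R (indep_complex e (nbhd e v :\ w)))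
    (realization R (indep_complex e finset.set0)).
Proof.
move=> sym irr Hs wP evw.
have hn : (3 * k + 2 = (3 * k + 1).+1)%N by rewrite addn2 addn1.
rewrite hn in Hs.
have out := Hs.2.2.2.
have N0 : (0 < 3 * k + 1)%N by rewrite addn1.
have [p [p0 pe pinj pP Pp]] := orient sym irr N0 Hs.
set U := nbhd e v :\ w.
have w1 : w = p 1%N.
  case: (Pp w wP) => j jN wj.
  have := evw; rewrite -p0 wj pe //.
  by case/orP => /eqP H; [rewrite -H | lia].
have Uv : forall u, u \in U -> e v u by move=> u; rewrite !inE => /andP [_].
have UP : forall u, u \in U -> u \notin P.
  move=> u uU; apply/negP => uP; move: uU; rewrite !inE => /andP [/eqP uw evu].
  case: (Pp u uP) => j jN uj.
  move: evu; rewrite -p0 uj pe //.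
  by case/orP => /eqP H; [apply: uw; rewrite w1 uj -H | lia].
set G := Gv k p U.
have C := core sym irr p0 pe pinj pP Pp out Uv UP.
have Gm0 : (0 < k.+1)%N by [].
have unionB : forall S : {set T}, indepb e S -> forall i, (i < k.+1)%N ->
    (G i @: S :|: G i.+1 @: S) \in indep_complex e finset.set0.
  move=> S iS i ik; rewrite inE indep_inE C // ?andbT //.
  by rewrite finset.disjoints_subset finset.setC0 finset.subsetT.
have unionA : forall S : {set T}, indepb e S -> [disjoint S & U] -> forall i, (i < k.+1)%N ->
    (G i @: S :|: G i.+1 @: S) \in indep_complex e U.
  move=> S iS dS i ik; rewrite inE indep_inE C // andbT.
  apply/pred0P => u /=; apply/negP => /andP [uAB uU].
  have H : forall j x, x \in S -> G j x \notin U.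
    move=> j x xS; apply: (Gv_notU _ pP UP); apply/negP => xU.
    by move/pred0P: dS => /(_ x) /=; rewrite xS xU.
  by case/finset.setUP: uAB => /imsetP [x xS ux]; move: uU; rewrite ux; apply/negP; apply: H.
have lastA : forall S : {set T}, indepb e S -> (G k.+1 @: S) \in indep_complex e U.
  move=> S iS; rewrite inE indep_inE; apply/andP; split.
    apply/pred0P => u /=; apply/negP => /andP [/imsetP [x xS ux] uU].
    by move: uU; rewrite ux; apply/negP; apply: (Gvk_notU _ pP UP).
  by apply: indepb_sub (C S iS k (leqnn k)); apply: finset.subsetUr.
have memB : forall x : T -> R, realization R (indep_complex e finset.set0) x ->
    [/\ (forall c, (0 <= x c)%R), (\sum_c x c = 1)%R & indepb e [set s | x s != 0%R]].
  move=> x [x0 [x1 xK]]; split => //; move: xK; rewrite inE indep_inE.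
  by case/andP.
have memA : forall x : T -> R, realization R (indep_complex e U) x ->
    [/\ (forall c, (0 <= x c)%R), (\sum_c x c = 1)%R, indepb e [set s | x s != 0%R]
      & [disjoint [set s | x s != 0%R] & U]].
  move=> x [x0 [x1 xK]]; split => //; move: xK; rewrite inE indep_inE;
  by case/andP.
split.
  move=> x /memA [x0 x1 ix dx]; apply: real_mem => //.
  by rewrite inE indep_inE ix andbT finset.disjoints_subset finset.setC0 finset.subsetT.
exists (push (G k.+1)); split; last split; last split.
- apply: continuous_subspaceT => z; exact: push_cont.
- move=> _ [x /memB [x0 x1 ix] <-]; apply: real_mem.
  + by move=> c; apply: push_ge0.
  + by rewrite push_sum.
  + by rewrite push_supp //; apply: lastA.
- exists (Hom k.+1 G); split.
  + apply: continuous_subspaceT => z; exact: Hom_cont.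
  + split.
      move=> t x t01 /memA [x0 x1 ix dx].
      have [h0 h1 h2] := Hom_mem Gm0 (@ic_down T e U) t01 x0 x1 (unionA _ ix dx).
      exact: real_mem.
    split; first by move=> x _; apply: Hom0.
    by move=> x _; rewrite Hom1.
- exists (Hom k.+1 G); split.
  + apply: continuous_subspaceT => z; exact: Hom_cont.
  + split.
      move=> t x t01 /memB [x0 x1 ix].
      have [h0 h1 h2] := Hom_mem Gm0 (@ic_down T e finset.set0) t01 x0 x1 (unionB _ ix).
      exact: real_mem.
    split; first by move=> x _; apply: Hom0.
    by move=> x _; rewrite Hom1.
Qed.
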